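(* Let $f:D\to\{0,1\}$, $D\subseteq\{0,1\}^n$, be a non-constant $n$-bit partial Boolean function. Then $f$ can be computed exactly by a quantum 1-query algorithm if and only if there exists a degree-1 SOS complex representation matrix $A$ of $f$ and $\bar f$ such that $A^\dagger A=\mathrm{diag}(u_0,u_1,\dots,u_n)$ for some numbers $u_0,\dots,u_n$ (i.e. the $n+1$ columns of $A$ are pairwise orthogonal).
   Context: An $n$-bit partial Boolean function is a map $f:D\to\{0,1\}$ with $D\subseteq\{0,1\}^n$; $\bar f(x)=1\oplus f(x)$ on $D$. For $x\in\{0,1\}^n$, $|F(x)\rangle_1=(1,(-1)^{x_1},\dots,(-1)^{x_n})^T$. A degree-1 SOS complex representation matrix of $f$ and $\bar f$ is a $(p+q)\times(n+1)$ complex matrix $A$ with rows $a^1,\dots,a^{p+q}\in\mathbb{C}^{n+1}$ (row vectors; columns indexed by $\emptyset,\{1\},\dots,\{n\}$) such that: $f(x)=\sum_{l=1}^p|a^l|F(x)\rangle_1|^2$ for all $x\in D$; $\sum_{l=1}^{p+q}|a^l|F(x)\rangle_1|^2=1$ for all $x\in\{0,1\}^n$; and hence $\bar f(x)=\sum_{l=p+1}^{p+q}|a^l|F(x)\rangle_1|^2$ for all $x\in D$. A quantum 1-query algorithm works in a finite-dimensional Hilbert space with orthonormal basis $\{|i,j'\rangle\}$, $i\in\{0,\dots,n\}$; the oracle is $O_x|i,j'\rangle=(-1)^{x_i}|i,j'\rangle$ for $i\ge 1$, $O_x|0,j'\rangle=|0,j'\rangle$; the algorithm applies input-independent unitaries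 $U_0,O_x,U_1$ to an initial state and performs a projective measurement with outcomes in $\{0,1\}$; it computes $f$ exactly if for every $x\in D$ the outcome is $f(x)$ with probability 1. *)

(* Defs.v *)
From HB Require Import structures.
From mathcomp Require Import all_boot all_order all_algebra.
From mathcomp Require Import reals complex.
Set Implicit Arguments.
Unset Strict Implicit.
Unset Printing Implicit Defensive.
Import Order.TTheory GRing.Theory Num.Theory.
Local Open Scope ring_scope.

Section Defs.
Variable R : realType.
Local Notation C := (R[i]).

Definition adj {m k : nat} (A : 'M[C]_(m, k)) : 'M[C]_(k, m) :=
  (map_mx Num.conj A)^T.

Definition sqnorm {d : nat} (v : 'cV[C]_d) : C := \sum_(k < d) `|v k 0| ^+ 2.

(* |F(x)>_1 = (1, (-1)^{x_1}, ..., (-1)^{x_n})^T, indices 0..n. *)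
Definition Fvec {n : nat} (x : {ffun 'I_n -> bool}) : 'cV[C]_(n.+1) :=
  \col_(i < n.+1) (if unlift ord0 i is Some j then (-1) ^+ (x j) else 1).

(* Degree-1 SOS complex representation matrix of f and \bar f:
   A has p + q rows a^1..a^(p+q); the first p rows are lshift q l (l < p). *)
Definition sos_rep1 (n : nat) (D : {set {ffun 'I_n -> bool}})
    (f : {ffun 'I_n -> bool} -> bool) (p q : nat) (A : 'M[C]_(p + q, n.+1)) :
    Prop :=
  (forall x, x \in D ->
     \sum_(l < p) `|(row (lshift q l) A *m Fvec x) 0 0| ^+ 2 = (f x)%:R)
  /\ (forall x : {ffun 'I_n -> bool},
     \sum_(l < p + q) `|(row l A *m Fvec x) 0 0| ^+ 2 = 1).

Definition unitary_mx {d : nat} (U : 'M[C]_d) : Prop := adj U *m U = 1%:M.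

Definition proj_meas01 {d : nat} (P : bool -> 'M[C]_d) : Prop :=
  (forall b, adj (P b) = P b) /\ (forall b, P b *m P b = P b)
  /\ P false + P true = 1%:M.

(* Oracle on the space with orthonormal basis |i,j'>, i < n+1, j' < m;
   |i,j'> is the standard basis vector with index mxvec_index i j'.
   O_x |i,j'> = (-1)^{x_i} |i,j'> for i >= 1, O_x |0,j'> = |0,j'>. *)
Definition oracle (n m : nat) (x : {ffun 'I_n -> bool}) : 'M[C]_(n.+1 * m) :=
  diag_mx (mxvec (\matrix_(i < n.+1, j < m) Fvec x i 0)).

Definition exact_1query (n : nat) (D : {set {ffun 'I_n -> bool}})
    (f : {ffun 'I_n -> bool} -> bool) : Prop :=
  exists (m : nat) (psi : 'cV[C]_(n.+1 * m)) (U0 U1 : 'M[C]_(n.+1 * m))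
         (P : bool -> 'M[C]_(n.+1 * m)),
    sqnorm psi = 1 /\ unitary_mx U0 /\ unitary_mx U1 /\ proj_meas01 P /\
    forall x, x \in D ->
      sqnorm (P (f x) *m (U1 *m (oracle m x *m (U0 *m psi)))) = 1.

End Defs.

(* Main.v *)
Require Import Defs.
From HB Require Import structures.
From mathcomp Require Import all_boot all_order all_algebra.
From mathcomp Require Import reals complex.
Import Order.TTheory GRing.Theory Num.Theory.
Local Open Scope ring_scope.
Set Implicit Arguments.
Unset Strict Implicit.
Unset Printing Implicit Defensive.

Section Aux.
Variable R : realType.
Local Notation C := (R[i]).

Lemma adjE m k (A : 'M[C]_(m, k)) i j : adj A i j = (A j i)^*.
Proof. by rewrite /adj !mxE. Qed.

Lemma adjM m k l (A : 'M[C]_(m, k)) (B : 'M[C]_(k, l)) :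
  adj (A *m B) = adj B *m adj A.
Proof. by rewrite /adj map_mxM trmx_mul. Qed.

Lemma adjK m k (A : 'M[C]_(m, k)) : adj (adj A) = A.
Proof. by apply/matrixP => i j; rewrite !adjE conjCK. Qed.

Lemma adjD m k (A B : 'M[C]_(m, k)) : adj (A + B) = adj A + adj B.
Proof. by apply/matrixP => i j; rewrite !mxE rmorphD. Qed.

Lemma adjN m k (A : 'M[C]_(m, k)) : adj (- A) = - adj A.
Proof. by apply/matrixP => i j; rewrite !mxE rmorphN. Qed.

Lemma adjB m k (A B : 'M[C]_(m, k)) : adj (A - B) = adj A - adj B.
Proof. by rewrite adjD adjN. Qed.

Lemma adj1 k : adj (1%:M : 'M[C]_k) = 1%:M.
Proof. by apply/matrixP => i j; rewrite adjE !mxE eq_sym rmorph_nat. Qed.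

Lemma adj0 m k : adj (0 : 'M[C]_(m, k)) = 0.
Proof. by apply/matrixP => i j; rewrite adjE !mxE rmorph0. Qed.

Lemma adj_col m1 m2 k (X : 'M[C]_(m1, k)) (Y : 'M[C]_(m2, k)) :
  adj (col_mx X Y) = row_mx (adj X) (adj Y).
Proof. by rewrite /adj map_col_mx tr_col_mx. Qed.

Lemma adj_col_mul m1 m2 k (X : 'M[C]_(m1, k)) (Y : 'M[C]_(m2, k)) :
  adj (col_mx X Y) *m col_mx X Y = adj X *m X + adj Y *m Y.
Proof. by rewrite adj_col mul_row_col. Qed.

Lemma sqnormE d (v : 'cV[C]_d) : sqnorm v = (adj v *m v) 0 0.
Proof.
rewrite /sqnorm mxE; apply: eq_bigr => k _.
by rewrite adjE normCK mulrC.
Qed.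

Lemma sqnorm_unitary d (U : 'M[C]_d) v : unitary_mx U -> sqnorm (U *m v) = sqnorm v.
Proof.
by move=> HU; rewrite !sqnormE adjM mulmxA -(mulmxA (adj v)) HU mulmx1.
Qed.

Lemma sqnorm_meas d (P : bool -> 'M[C]_d) v : proj_meas01 P ->
  sqnorm (P false *m v) + sqnorm (P true *m v) = sqnorm v.
Proof.
move=> [Ha [Hi Hs]].
have E b : adj (P b *m v) *m (P b *m v) = adj v *m (P b *m v).
  by rewrite adjM Ha -mulmxA (mulmxA (P b)) Hi.
have F (X Y : 'M[C]_1) : X 0 0 + Y 0 0 = (X + Y) 0 0 by rewrite mxE.
by rewrite !sqnormE !E F -mulmxDr -mulmxDl Hs mul1mx.
Qed.

Lemma sum_rows k d (A : 'M[C]_(k, d)) (v : 'cV[C]_d) :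
  \sum_(l < k) `|(row l A *m v) 0 0| ^+ 2 = sqnorm (A *m v).
Proof. by apply: eq_bigr => l _; rewrite -row_mul mxE. Qed.

Lemma sum_rows_top p q d (X : 'M[C]_(p, d)) (Y : 'M[C]_(q, d)) (v : 'cV[C]_d) :
  \sum_(l < p) `|(row (lshift q l) (col_mx X Y) *m v) 0 0| ^+ 2 = sqnorm (X *m v).
Proof. by rewrite -sum_rows; apply: eq_bigr => l _; rewrite rowKu. Qed.

Lemma sum_delta (T : finType) (c : T) (g : T -> C) :
  \sum_t (t == c)%:R * g t = g c.
Proof.
rewrite (bigD1 c) //= eqxx mul1r big1 ?addr0 // => t /negbTE ->.
by rewrite mul0r.
Qed.

Lemma Fvec_conj n (x : {ffun 'I_n -> bool}) i : (Fvec R x i 0)^* * Fvec R x i 0 = 1.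
Proof.
rewrite mxE; case: unliftP => [j _|_]; last by rewrite rmorph1 mulr1.
by case: (x j); rewrite ?expr1 ?expr0 ?rmorphN ?rmorph1 ?mulrNN mulr1.
Qed.

Lemma oracle_unitary n m (x : {ffun 'I_n -> bool}) : unitary_mx (oracle R m x).
Proof.
rewrite /unitary_mx /oracle /adj map_diag_mx tr_diag_mx mulmx_diag.
apply/matrixP => r s; rewrite !mxE. idtac.
case/mxvec_indexP: r => a b; rewrite mxvecE mxE (Fvec_conj x a).
by [].
Qed.


Lemma sqnorm_col p q (a : 'cV[C]_p) (b : 'cV[C]_q) :
  sqnorm (col_mx a b) = sqnorm a + sqnorm b.
Proof. by rewrite !sqnormE adj_col_mul mxE. Qed.

Lemma meas_adj d (P : bool -> 'M[C]_d) k (X : 'M[C]_(d, k)) b : proj_meas01 P ->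
  adj (P b *m X) *m (P b *m X) = adj X *m (P b *m X).
Proof. by move=> [Ha [Hi Hs]]; rewrite adjM Ha -mulmxA (mulmxA (P b)) Hi. Qed.

Lemma forward n (D : {set {ffun 'I_n -> bool}}) (f : {ffun 'I_n -> bool} -> bool) :
  exact_1query R D f ->
  exists (p q : nat) (A : 'M[R[i]]_(p + q, n.+1)),
    sos_rep1 D f A /\ exists u : 'rV[R[i]]_(n.+1), adj A *m A = diag_mx u.
Proof.
move=> [m [psi [U0 [U1 [P [Hpsi [HU0 [HU1 [HP Hx]]]]]]]]].
have Hphi : sqnorm (U0 *m psi) = 1 by rewrite sqnorm_unitary.
move: (U0 *m psi) Hphi Hx => phi Hphi Hx.
pose ind (i : 'I_n.+1) : 'rV[C]_(n.+1 * m) := mxvec (\matrix_(i', j) ((i' == i)%:R : C)).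
pose Phi : 'M[C]_(n.+1 * m, n.+1) := \matrix_(r, i) (phi r 0 * ind i 0 r).
have Horc x : oracle R m x *m phi = Phi *m Fvec R x.
  apply/matrixP => r j; rewrite ord1 {j} mul_diag_mx !mxE.
  case/mxvec_indexP: r => a b; rewrite mxvecE mxE.
  under eq_bigr do rewrite !mxE mxvecE mxE mulrAC mulrC.
  under eq_bigr do rewrite eq_sym.
  by rewrite sum_delta mulrC [Fvec _ _ _ _]mxE.
have Hnorm x : sqnorm (U1 *m (oracle R m x *m phi)) = 1.
  rewrite sqnorm_unitary; last exact: HU1.
  by rewrite sqnorm_unitary; last exact: oracle_unitary.
exists (n.+1 * m)%N, (n.+1 * m)%N,
  (col_mx (P true *m (U1 *m Phi)) (P false *m (U1 *m Phi))).
split; [split|].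
- move=> x xD; rewrite sum_rows_top -(mulmxA (P true)) -(mulmxA U1) -Horc.
  have Hs := sqnorm_meas (U1 *m (oracle R m x *m phi)) HP.
  have := Hx x xD; case: (f x) => // H0.
  by move: Hs; rewrite Hnorm H0 addrC => /eqP; rewrite -subr_eq0 addrK => /eqP ->.
- move=> x; rewrite sum_rows mul_col_mx sqnorm_col.
  rewrite -(mulmxA (P true)) -(mulmxA (P false)) -(mulmxA U1) -Horc.
  by rewrite addrC sqnorm_meas // Hnorm.
exists (\row_i (adj Phi *m Phi) i i).
rewrite adj_col_mul !meas_adj // -mulmxDr -mulmxDl.
case: HP => _ [_ HS]; rewrite addrC HS mul1mx adjM -mulmxA (mulmxA (adj U1)) HU1 mul1mx.
apply/matrixP => i k; rewrite [in RHS]mxE.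
case: (eqVneq i k) => [->|ne]; first by rewrite mulr1n [RHS]mxE.
rewrite [RHS](_ : _ = 0); last by rewrite mxE. rewrite mxE; apply: big1 => r _; rewrite adjE !mxE.
case/mxvec_indexP: r => a b; rewrite !mxvecE !mxE.
case: (eqVneq a i) => [ai|nai]; last by rewrite mulr0 rmorph0 mul0r.
by move: ne; rewrite -ai => /negbTE ->; rewrite !mulr0.
Qed.

Lemma mxvec_index_inj m k (i i' : 'I_m) (j j' : 'I_k) :
  mxvec_index i j = mxvec_index i' j' -> i = i' /\ j = j'.
Proof.
move=> E; have := mxvecE (delta_mx i j : 'M[C]_(m, k)) i' j'.
rewrite -E mxvecE !mxE !eqxx /=.
move=> /eqP; rewrite eq_sym pnatr_eq1.
case: (eqVneq i' i) => [->|ne]; case: (eqVneq j' j) => [->|ne'] //; by rewrite ?andbF.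

Qed.

Lemma sum_ind d (c1 c2 : 'I_d) :
  \sum_r (((r == c1)%:R : C)^* * (r == c2)%:R) = (c1 == c2)%:R.
Proof. by under eq_bigr do rewrite conjC_nat; rewrite sum_delta. Qed.

Lemma dilation d (a : 'M[C]_d) :
  a *m adj a *m a = a -> a *m a = 0 ->
  let U := 1%:M - (a *m adj a + adj a *m a) + (a + adj a) in
  adj U = U /\ U *m U = 1%:M.
Proof.
move=> aba aa U.
set b := adj a.
have bab : b *m a *m b = b by have := congr1 (@adj R d d) aba; rewrite !adjM adjK mulmxA.
have bb : b *m b = 0 by rewrite /b -adjM aa adj0.
have aba' : a *m (b *m a) = a by rewrite mulmxA.
have bab' : b *m (a *m b) = b by rewrite mulmxA.
set e := a *m b + b *m a.
set g := a + b.
have gg : g *m g = e.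
  by rewrite /g mulmxDl !mulmxDr aa bb add0r addr0.
have ge : g *m e = g.
  by rewrite /g /e mulmxDl !mulmxDr !mulmxA aa bb aba bab !mul0mx add0r addr0.
have eg : e *m g = g by rewrite -gg -(mulmxA g g g) gg -[in RHS]ge.
have ee : e *m e = e by rewrite -{1}gg -(mulmxA g g e) ge gg.
split.
  rewrite /U adjD adjB adj1 adjD adjD /b adjK !adjM adjK.
  by rewrite (addrC (adj a)).
have xx : (1%:M - e) *m (1%:M - e) = 1%:M - e.
  by rewrite mulmxBl mul1mx mulmxBr mulmx1 ee subrr subr0.
have xg : (1%:M - e) *m g = 0 by rewrite mulmxBl mul1mx eg subrr.
have gx : g *m (1%:M - e) = 0 by rewrite mulmxBr mulmx1 ge subrr.
by rewrite /U -/b -/e -/g mulmxDl (mulmxDr (1%:M - e)) (mulmxDr g) xx xg gx gg addr0 add0r subrK.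
Qed.

Lemma backward n (D : {set {ffun 'I_n -> bool}}) (f : {ffun 'I_n -> bool} -> bool)
  p q (A : 'M[C]_(p + q, n.+1)) (u : 'rV[C]_(n.+1)) :
  sos_rep1 D f A -> adj A *m A = diag_mx u -> exact_1query R D f.
Proof.
move=> [Hf Htot] HA.
set k := (p + q)%N.
pose K : 'M[C]_(n.+1 * k.+1, n.+1) :=
  \matrix_(r, i) (r == mxvec_index i (ord0 : 'I_k.+1))%:R.
pose J : 'M[C]_(n.+1 * k.+1, k) :=
  \matrix_(r, l) (r == mxvec_index (ord0 : 'I_n.+1) (lift ord0 l))%:R.
have KK : adj K *m K = 1%:M.
  apply/matrixP => i j; rewrite !mxE.
  under eq_bigr do rewrite adjE !mxE.
  rewrite sum_ind; case: (eqVneq i j) => [->|ne]; first by rewrite eqxx.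
  case: eqP => [/mxvec_index_inj [E _]|//]; by rewrite E eqxx in ne.
have JJ : adj J *m J = 1%:M.
  apply/matrixP => i j; rewrite !mxE.
  under eq_bigr do rewrite adjE !mxE.
  rewrite sum_ind; case: (eqVneq i j) => [->|ne]; first by rewrite eqxx.
  case: eqP => [/mxvec_index_inj [_ /lift_inj E]|//]; by rewrite E eqxx in ne.
have JK : adj J *m K = 0.
  apply/matrixP => i j; rewrite !mxE.
  under eq_bigr do rewrite adjE !mxE.
  rewrite sum_ind; case: eqP => [/mxvec_index_inj [_ E]|//].
  by move/eqP: E; rewrite eq_sym (negbTE (neq_lift _ _)).
have KJ : adj K *m J = 0 by rewrite -[J]adjK -adjM JK adj0.
have OK x : oracle R k.+1 x *m K = K *m diag_mx (Fvec R x)^T.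
  apply/matrixP => r i; rewrite mul_diag_mx mul_mx_diag !mxE.
  case: (eqVneq r (mxvec_index i ord0)) => [->|ne]; last by rewrite mulr0 mul0r.
  by rewrite mxvecE !mxE mulr1 mul1r.
have Hu i : u 0 i = \sum_l `|A l i| ^+ 2.
  have := congr1 (fun M : 'M[C]_(n.+1) => M i i) HA; rewrite !mxE eqxx mulr1n => <-.
  by apply: eq_bigr => l _; rewrite adjE normCK mulrC.
have Hu0 i : 0 <= u 0 i by rewrite Hu sumr_ge0 // => l _; rewrite exprn_ge0.
pose s : 'rV[C]_(n.+1) := \row_i sqrtC (u 0 i).
have Hs2 i : s 0 i * s 0 i = u 0 i by rewrite mxE -expr2 sqrtCK.
have Hsge0 i : 0 <= s 0 i by rewrite mxE sqrtC_ge0.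
have Hsc i : (s 0 i)^* = s 0 i by rewrite geC0_conj.
clearbody s.
have HA0 i l : s 0 i = 0 -> A l i = 0.
  move=> s0; have : u 0 i = 0 by rewrite -Hs2 s0 mulr0.
  rewrite Hu => /psumr_eq0P H.
  have /eqP := H (fun l _ => exprn_ge0 2 (normr_ge0 (A l i))) l isT.
  by rewrite sqrf_eq0 normr_eq0 => /eqP.
pose W : 'M[C]_(k, n.+1) := \matrix_(l, i) (A l i / s 0 i).
have HWs : W *m diag_mx s = A.
  apply/matrixP => l i; rewrite mul_mx_diag !mxE.
  case: (eqVneq (s 0 i) 0) => [s0|sn0]; last by rewrite divfK.
  by rewrite s0 mulr0 HA0.
pose qv : 'rV[C]_(n.+1) := \row_i (s 0 i != 0)%:R.
have HWW : adj W *m W = diag_mx qv.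
  apply/matrixP => i j; rewrite !mxE.
  have E : \sum_l (A l i)^* * A l j = u 0 i *+ (i == j).
    have := congr1 (fun M : 'M[C]_(n.+1) => M i j) HA.
    rewrite [in RHS]mxE [in LHS]mxE => <-.
    by apply: eq_bigr => l _; rewrite adjE.
  under eq_bigr do rewrite adjE !mxE rmorphM fmorphV /= Hsc mulrACA mulrC.
  rewrite -mulr_sumr E.
  case: (eqVneq i j) => [<-|ne]; last by rewrite !mulr0n mulr0.
  rewrite !mulr1n -Hs2.
  case: (eqVneq (s 0 i) 0) => [->|sn0]; first by rewrite invr0 !mul0r.
  by rewrite mulrACA mulVf // mul1r.
have HWq : W *m diag_mx qv = W.
  apply/matrixP => l i; rewrite mul_mx_diag !mxE.
  case: (eqVneq (s 0 i) 0) => [->|sn0]; first by rewrite invr0 !mulr0.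
  by rewrite mulr1.
clearbody W.
have sqJ (v : 'cV[C]_k) : sqnorm (J *m v) = sqnorm v.
  by rewrite !sqnormE adjM -mulmxA (mulmxA (adj J)) JJ mul1mx.
have sqK (v : 'cV[C]_(n.+1)) : sqnorm (K *m v) = sqnorm v.
  by rewrite !sqnormE adjM -mulmxA (mulmxA (adj K)) KK mul1mx.
have Hsum x : sqnorm (A *m Fvec R x) = \sum_i u 0 i.
  rewrite sqnormE adjM -mulmxA (mulmxA (adj A)) HA mul_diag_mx mxE.
  apply: eq_bigr => i _; rewrite mxE adjE mulrCA.
  by rewrite (Fvec_conj x i) mulr1.
have Hu1 : \sum_i u 0 i = 1.
  by rewrite -(Hsum [ffun => false]) -sum_rows Htot.
pose V : 'M[C]_(n.+1 * k.+1) := J *m W *m adj K.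
have aV : adj V = K *m adj W *m adj J by rewrite /V !adjM adjK mulmxA.
have VK : V *m K = J *m W by rewrite /V -mulmxA KK mulmx1.
have VJ : V *m J = 0 by rewrite /V -mulmxA KJ mulmx0.
have aVK : adj V *m K = 0 by rewrite aV -mulmxA JK mulmx0.
have aVJ : adj V *m J = K *m adj W by rewrite aV -mulmxA JJ mulmx1.
have Vaba : V *m adj V *m V = V.
  rewrite {3}/V !mulmxA -(mulmxA V (adj V) J) aVJ mulmxA VK.
  by rewrite -(mulmxA (J *m W) (adj W) W) HWW -(mulmxA J W) HWq.
have Vaa : V *m V = 0 by rewrite {2}/V !mulmxA VJ !mul0mx.
clearbody V.
have /= [Uadj UU] := dilation Vaba Vaa.
set U1 := (X in adj X = X) in Uadj UU.
have U1K : U1 *m K = K - K *m diag_mx qv + J *m W.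
  rewrite /U1 mulmxDl mulmxBl mul1mx !mulmxDl -!mulmxA aVK VK mulmx0 addr0.
  by rewrite mulmxA aVJ -mulmxA HWW add0r.
pose pv : 'rV[C]_k := \row_l (l < p)%N%:R.
pose Pt : 'M[C]_(n.+1 * k.+1) := J *m diag_mx pv *m adj J.
have Dadj : adj (diag_mx pv) = diag_mx pv.
  apply/matrixP => i j; rewrite adjE !mxE rmorphMn /= conjC_nat eq_sym.
  by case: eqP => // ->.
have DD : diag_mx pv *m diag_mx pv = diag_mx pv.
  rewrite mulmx_diag; congr diag_mx; apply/rowP => l; rewrite !mxE.
  by case: (l < p)%N; rewrite ?mulr1 ?mulr0.
have Ptadj : adj Pt = Pt by rewrite /Pt !adjM adjK Dadj mulmxA.
have PtPt : Pt *m Pt = Pt.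
  rewrite /Pt !mulmxA -(mulmxA (J *m diag_mx pv) (adj J) J) JJ mulmx1.
  by rewrite -(mulmxA J) DD.
pose P := fun b : bool => if b then Pt else 1%:M - Pt.
have HP : proj_meas01 P.
  split; [|split].
  - by case; rewrite /P ?adjB ?adj1 Ptadj.
  - by case; rewrite /P // mulmxBl mul1mx mulmxBr mulmx1 PtPt subrr subr0.
  - by rewrite /P subrK.
exists k.+1, (K *m s^T), 1%:M, U1, P.
split; [|split; [|split; [|split]]].
- rewrite sqK -Hu1 /sqnorm; apply: eq_bigr => i _.
  by rewrite mxE (ger0_norm (Hsge0 i)) expr2 Hs2.
- by rewrite /unitary_mx adj1 mul1mx.
- by rewrite /unitary_mx Uadj UU.
- exact: HP.
move=> x xD; rewrite mul1mx (mulmxA (oracle R k.+1 x) K) OK -(mulmxA K) (mulmxA U1 K) U1K.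
set t := diag_mx (Fvec R x)^T *m s^T.
have Qt : diag_mx qv *m t = t.
  apply/matrixP => i j; rewrite ord1 /t !mul_diag_mx !mxE.
  case: (eqVneq (s 0 i) 0) => [->|sn0]; first by rewrite !mulr0.
  by rewrite mul1r.
have Wt : W *m t = A *m Fvec R x.
  rewrite -HWs -mulmxA; congr (_ *m _).
  apply/matrixP => i j; rewrite /t !mul_diag_mx !mxE.
  by rewrite ord1 mulrC.
rewrite mulmxDl mulmxBl -mulmxA Qt subrr add0r -mulmxA Wt.
set w := A *m Fvec R x.
have HPt : sqnorm (Pt *m (J *m w)) = (f x)%:R.
  rewrite /Pt -!mulmxA (mulmxA (adj J) J) JJ mul1mx sqJ.
  rewrite -(Hf x xD) /sqnorm big_split_ord /= [X in _ + X]big1 ?addr0; last first.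
    move=> l _; rewrite mul_diag_mx !mxE /=.
    by rewrite ltnNge leq_addr /= mul0r normr0 expr0n.
  apply: eq_bigr => l _; rewrite mul_diag_mx !mxE /= ltn_ord mul1r.
  by under [in RHS]eq_bigr do rewrite mxE.
have Hw : sqnorm (J *m w) = 1 by rewrite sqJ -sum_rows Htot.
case Efx: (f x); first by rewrite /P HPt Efx.
have := sqnorm_meas (J *m w) HP; rewrite Hw [P true]/P HPt Efx addr0.
by [].
Qed.

End Aux.

Theorem theorem3 (R : realType) (n : nat) (D : {set {ffun 'I_n -> bool}})
    (f : {ffun 'I_n -> bool} -> bool)
    (nonconst : exists x y, [/\ x \in D, y \in D & f x != f y]) :
  exact_1query R D f <->
  exists (p q : nat) (A : 'M[R[i]]_(p + q, n.+1)),
    sos_rep1 D f A /\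
    exists u : 'rV[R[i]]_(n.+1), adj A *m A = diag_mx u.
Proof.
split; first exact: forward.
by move=> [p [q [A [H [u Hu]]]]]; exact: (backward H Hu).
Qed.
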